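(* Let $\mathcal{A}$ be a safe GTA without renamings with $n\ge1$ clocks, and let $M\in\mathbb{N}$ be such that every finite constant $c$ in a guard of $\mathcal{A}$ satisfies $|c|\le M$. Let $\rho: (q_1,v_1)\xrightarrow{\delta_1,t_1}(q_2,v_2)\xrightarrow{\delta_2,t_2}\cdots(q_k,v_k)$ be a path in the transition system of $\mathcal{A}$ such that $v_1\sim_M v_k$ and for every future clock $x$, either $x$ is released in the transition sequence $t_1\dots t_{k-1}$ or $v_1(x)=-\infty$. Let $L=\{x\mid -M\le v_1(x)\}$, and let $v_k'$ be a valuation with $v_k'\!\downarrow_L=v_k\!\downarrow_L$ and $v_1\approx_M v_k'$. Then there is a path $\rho': (q_1,v_1)=(q_1,v_1')\xrightarrow{\delta_1,t_1}(q_2,v_2')\xrightarrow{\delta_2,t_2}\cdots(q_k,v_k')$ in the transition system of $\mathcal{A}$ leading from $(q_1,v_1)$ to $(q_k,v_k')$.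
   Context: Clocks, valuations: $X=X_F\uplus X_H$ (future / history clocks), $n=|X|$, constant clock $0$; $\overline{\mathbb{R}}=\mathbb{R}\cup\{\pm\infty\}$ with $(+\infty)+\alpha=+\infty$, $(-\infty)+\beta=-\infty$ for $\beta\ne+\infty$, $-(\pm\infty)=\mp\infty$. A valuation $v:X\cup\{0\}\to\overline{\mathbb{R}}$ has $v(0)=0$, history clocks in $\mathbb{R}_{\ge0}\cup\{+\infty\}$, future clocks in $\mathbb{R}_{\le0}\cup\{-\infty\}$; $v\!\downarrow_L$ is restriction to $L$. Constraints: conjunctions of $x-y\triangleleft c$ ($x,y\in X\cup\{0\}$, ${\triangleleft}\in\{<,\le\}$, $c\in\mathbb{Z}\cup\{\pm\infty\}$), $v\models x-y\triangleleft c$ iff $v(x)-v(y)\triangleleft c$. $v+\delta$ adds $\delta$ to each clock; $[R]v$ is the set of $v'$ with $v'(x)=0$ for $x\in R\cap X_H$, $v'(x)=v(x)$ for $x\notin R$, arbitrary for $x\in R\cap X_F$ (released). GTA without renamings: transitions $t=(q,a,\mathsf{prog},q')$, $\mathsf{prog}$ a sequence of guards $g$ ($v\xrightarrow{g}v$ iff $v\models g$) and changes $[R]$ ($v\xrightarrow{[R]}v'$ iff $v'\in[R]v$); a future clock $x$ is released in $t$ if $\mathsf{prog}$ contains $[R]$ with $x\in R$. A step $(q,v)\xrightarrow{\delta,t}(q',v')$ means $v+\delta$ is a valuation and $v+\delta\xrightarrow{\mathsf{prog}}v'$. Safety: with $X_D$ the future clocks occurring in guards $x-y\triangleleft c$ with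 $x,y\in X_F$, every program checks each clock of $X_D$ to be $0$ or $-\infty$ before releasing it, and initial guards force every history clock to $0$ or $+\infty$. For $\alpha\in\mathbb{R}$, $\{\alpha\}=\alpha-\lfloor\alpha\rfloor$. $\alpha\sim_K\beta$ iff $\alpha\triangleleft c\iff\beta\triangleleft c$ for ${\triangleleft}\in\{<,\le\}$, $c\in\{\pm\infty\}$ or $c\in\mathbb{Z}$ with $|c|\le K$; $v_1\sim_M v_2$ iff $v_1(x)\sim_{nM}v_2(x)$ for all $x$ and $v_1(x)-v_1(y)\sim_{(n+1)M}v_2(x)-v_2(y)$ for all $x,y$. $v_1\approx_M v_2$ iff for all clocks $x,y$: (1) $v_1(x)\triangleleft c\iff v_2(x)\triangleleft c$ for $c\in\{\pm\infty\}$ or $c\in\mathbb{Z}$, $c\le M$; (2) $v_1\models x-y\triangleleft c\iff v_2\models x-y\triangleleft c$ for $c\in\{\pm\infty\}$ or $c\in\mathbb{Z}$, $|c|\le M$; (3) if $-\infty<v_1(x),v_1(y)\le M$ then $\{v_1(x)\}\le\{v_1(y)\}\iff\{v_2(x)\}\le\{v_2(y)\}$. *)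

(* Defs.v *)
From mathcomp Require Import ssreflect ssrbool eqtype fintype.
From Stdlib Require Import Reals ZArith List.
Set Implicit Arguments.
Unset Strict Implicit.
Open Scope R_scope.

Inductive ER : Type := Fin (r : R) | PInf | NInf.

Definition eadd (a b : ER) : ER :=
  match a, b with
  | PInf, _ => PInf
  | _, PInf => PInf
  | NInf, _ => NInf
  | _, NInf => NInf
  | Fin x, Fin y => Fin (x + y)
  end.

Definition eopp (a : ER) : ER :=
  match a with Fin x => Fin (- x) | PInf => NInf | NInf => PInf end.

Definition esub (a b : ER) : ER := eadd a (eopp b).

Definition ele (a b : ER) : Prop :=
  match a, b with
  | NInf, _ => True
  | _, PInf => True
  | Fin x, Fin y => x <= y
  | _, _ => False
  end.

Definition elt (a b : ER) : Prop := ele a b /\ a <> b.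

Inductive cst : Type := CZ (z : Z) | CPInf | CNInf.

Definition cst_val (c : cst) : ER :=
  match c with CZ z => Fin (IZR z) | CPInf => PInf | CNInf => NInf end.

Inductive op : Type := OLt | OLe.

Definition cmp (o : op) (a : ER) (c : cst) : Prop :=
  match o with OLt => elt a (cst_val c) | OLe => ele a (cst_val c) end.

Definition cst_abs_le (K : nat) (c : cst) : Prop :=
  match c with CZ z => (Z.abs z <= Z.of_nat K)%Z | _ => True end.

Definition cst_le (M : nat) (c : cst) : Prop :=
  match c with CZ z => (z <= Z.of_nat M)%Z | _ => True end.

Definition simK (K : nat) (a b : ER) : Prop :=
  forall (o : op) (c : cst), cst_abs_le K c -> (cmp o a c <-> cmp o b c).

Section Clocks.
Variable X : finType.
(* fut x = true iff x ∈ X_F (future clock); otherwise x ∈ X_H (history clock) *)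
Variable fut : X -> bool.

Definition nclocks : nat := #|X|.

(* valuations; the constant clock 0 is [None] and always has value 0 *)
Definition valu := X -> ER.
Definition ev (v : valu) (c : option X) : ER :=
  match c with None => Fin 0 | Some x => v x end.

Definition is_val (v : valu) : Prop :=
  forall x, if fut x
            then (v x = NInf \/ exists r, v x = Fin r /\ r <= 0)
            else (v x = PInf \/ exists r, v x = Fin r /\ 0 <= r).

Record atom := Atom { ax : option X; ay : option X; aop : op; acst : cst }.
Definition guard := list atom.

Definition sat_atom (v : valu) (a : atom) : Prop :=
  cmp (aop a) (esub (ev v (ax a)) (ev v (ay a))) (acst a).
Definition sat (v : valu) (g : guard) : Prop :=
  forall a, In a g -> sat_atom v a.

Inductive instr := IGuard (g : guard) | IChange (Rs : list X).
Definition prog := list instr.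

Definition change (Rs : list X) (v v' : valu) : Prop :=
  is_val v' /\
  (forall x, In x Rs -> fut x = false -> v' x = Fin 0) /\
  (forall x, ~ In x Rs -> v' x = v x).

Inductive run : prog -> valu -> valu -> Prop :=
| run_nil v : run nil v v
| run_guard g p v v' : sat v g -> run p v v' -> run (IGuard g :: p) v v'
| run_change Rs p v v1 v' : change Rs v v1 -> run p v1 v' -> run (IChange Rs :: p) v v'.

Definition shift (v : valu) (d : R) : valu :=
  fun x => match v x with Fin r => Fin (r + d) | e => e end.

Definition prog_guards (p : prog) : list guard :=
  flat_map (fun i => match i with IGuard g => g :: nil | _ => nil end) p.

Section Automaton.
Variables Q Sg : finType.

Definition trans := (Q * Sg * prog * Q)%type.
Definition tsrc (t : trans) : Q := let '(q, _, _, _) := t in q.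
Definition tprog (t : trans) : prog := let '(_, _, p, _) := t in p.
Definition tdst (t : trans) : Q := let '(_, _, _, q) := t in q.

Record GTA := { gtrans : list trans; ginit : list (Q * guard) }.

Definition guards_of (A : GTA) : list guard :=
  map snd (ginit A) ++ flat_map (fun t => prog_guards (tprog t)) (gtrans A).

Definition const_bound (M : nat) (A : GTA) : Prop :=
  forall g a z, In g (guards_of A) -> In a g -> acst a = CZ z ->
    (Z.abs z <= Z.of_nat M)%Z.

Definition in_XD (A : GTA) (x : X) : Prop :=
  fut x = true /\
  exists g a y, In g (guards_of A) /\ In a g /\ fut y = true /\
    ((ax a = Some x /\ ay a = Some y) \/ (ax a = Some y /\ ay a = Some x)).

Definition safe (A : GTA) : Prop :=
  (forall t p1 Rs p2 x, In t (gtrans A) ->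
     tprog t = p1 ++ IChange Rs :: p2 -> In x Rs -> in_XD A x ->
     forall v v', is_val v -> run p1 v v' -> v' x = Fin 0 \/ v' x = NInf) /\
  (forall q g v, In (q, g) (ginit A) -> is_val v -> sat v g ->
     forall x, fut x = false -> v x = Fin 0 \/ v x = PInf).

Definition released (t : trans) (x : X) : Prop :=
  fut x = true /\ exists Rs, In (IChange Rs) (tprog t) /\ In x Rs.

Definition step (A : GTA) (q : Q) (v : valu) (d : R) (t : trans) (q' : Q) (v' : valu) : Prop :=
  In t (gtrans A) /\ tsrc t = q /\ tdst t = q' /\ 0 <= d /\
  is_val (shift v d) /\ run (tprog t) (shift v d) v'.

(* path (q_1,v_1) -> ... -> (q_k,v_k), indexed 0..k-1 *)
Definition is_path (A : GTA) (k : nat) (qs : nat -> Q) (vs : nat -> valu)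
    (ds : nat -> R) (ts : nat -> trans) : Prop :=
  le 1 k /\
  (forall i, lt i k -> is_val (vs i)) /\
  (forall i, lt (S i) k ->
     step A (qs i) (vs i) (ds i) (ts i) (qs (S i)) (vs (S i))).

End Automaton.

Definition simM (M : nat) (v1 v2 : valu) : Prop :=
  (forall x, simK (Nat.mul nclocks M) (v1 x) (v2 x)) /\
  (forall x y, simK (Nat.mul (S nclocks) M) (esub (v1 x) (v1 y)) (esub (v2 x) (v2 y))).

Definition approxM (M : nat) (v1 v2 : valu) : Prop :=
  (forall x o c, cst_le M c -> (cmp o (v1 x) c <-> cmp o (v2 x) c)) /\
  (forall x y o c, cst_abs_le M c ->
     (cmp o (esub (v1 x) (v1 y)) c <-> cmp o (esub (v2 x) (v2 y)) c)) /\
  (forall x y r1 s1 r2 s2,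
     v1 x = Fin r1 -> v1 y = Fin s1 -> r1 <= INR M -> s1 <= INR M ->
     v2 x = Fin r2 -> v2 y = Fin s2 ->
     (frac_part r1 <= frac_part s1 <-> frac_part r2 <= frac_part s2)).

End Clocks.

(* Main.v *)
Require Import Defs.
From mathcomp Require Import ssreflect ssrbool eqtype fintype.
From Stdlib Require Import Reals ZArith List Lia Lra.
From Stdlib Require Import ClassicalEpsilon FunctionalExtensionality Classical.
Open Scope R_scope.

Definition eshift (e : ER) (d : R) : ER :=
  match e with Fin r => Fin (r + d) | e => e end.

Lemma eshift0 e : eshift e 0 = e.
Proof. destruct e; simpl; try reflexivity; f_equal; ring. Qed.

Lemma eshift_add e a b : eshift (eshift e a) b = eshift e (a + b).
Proof. destruct e; simpl; try reflexivity; f_equal; ring. Qed.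

Definition er (e : ER) : R := match e with Fin r => r | _ => 0 end.

Fixpoint sumd (ds : nat -> R) (i n : nat) : R :=
  match n with O => 0 | S n => ds i + sumd ds (S i) n end.

Lemma sumd_last ds i n : sumd ds i (S n) = sumd ds i n + ds (i + n)%nat.
Proof.
  revert i; induction n as [|n IH]; intros i; simpl.
  - rewrite Nat.add_0_r; ring.
  - simpl in IH. rewrite IH. replace (S i + n)%nat with (i + S n)%nat by lia. ring.
Qed.

Definition modv {X : finType} (P : X -> Prop) (f : X -> R) (w : valu X) : valu X :=
  fun x => match excluded_middle_informative (P x) with
           | left _ => Fin (f x) | right _ => w x end.

Lemma modv_act {X : finType} {P : X -> Prop} {f w x} : P x -> modv P f w x = Fin (f x).
Proof. intros H; unfold modv; destruct (excluded_middle_informative (P x)); tauto. Qed.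

Lemma modv_nact {X : finType} {P : X -> Prop} {f w x} : ~ P x -> modv P f w x = w x.
Proof. intros H; unfold modv; destruct (excluded_middle_informative (P x)); tauto. Qed.

Lemma modv_ext {X : finType} (P P' : X -> Prop) f f' w w' :
  (forall x, P x <-> P' x) -> (forall x, P x -> f x = f' x) ->
  (forall x, ~ P x -> w x = w' x) -> modv P f w = modv P' f' w'.
Proof.
  intros H1 H2 H3; apply functional_extensionality; intros x.
  destruct (classic (P x)) as [Hp|Hp].
  - rewrite (modv_act Hp) (modv_act (proj1 (H1 x) Hp)) (H2 x Hp); reflexivity.
  - assert (~ P' x) by (intro; apply Hp, H1; assumption).
    rewrite (modv_nact Hp) (modv_nact H); apply H3; assumption.
Qed.

Lemma modv_val {X : finType} (fut : X -> bool) (P : X -> Prop) f w :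
  is_val fut w -> (forall x, P x -> fut x = true) -> (forall x, P x -> f x <= 0) ->
  is_val fut (modv P f w).
Proof.
  intros Hv H1 H2 x. destruct (classic (P x)) as [Hp|Hp].
  - rewrite (modv_act Hp) (H1 x Hp). right; exists (f x); split; auto.
  - rewrite (modv_nact Hp). apply Hv.
Qed.

Lemma run_app {X : finType} (fut : X -> bool) p1 p2 a b c :
  run fut p1 a b -> run fut p2 b c -> run fut (p1 ++ p2) a c.
Proof.
  induction 1; intros; simpl; [assumption | econstructor; eauto | econstructor; eauto].
Qed.

Lemma run_split {X : finType} (fut : X -> bool) p1 p2 a c :
  run fut (p1 ++ p2) a c -> exists b, run fut p1 a b /\ run fut p2 b c.
Proof.
  revert a; induction p1 as [|i p1 IH]; intros a H; simpl in H.
  - exists a; split; [constructor|assumption].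
  - inversion H as [|g p v v' Hs Hr|Rs p v v1 v' Hc Hr]; subst.
    + destruct (IH _ Hr) as [b [H1 H2]]; exists b; split; [constructor; auto|auto].
    + destruct (IH _ Hr) as [b [H1 H2]]; exists b; split; [econstructor; eauto|auto].
Qed.

Lemma run_unch {X : finType} (fut : X -> bool) p a c x :
  run fut p a c -> (forall Rs, In (IChange Rs) p -> ~ In x Rs) -> c x = a x.
Proof.
  induction 1 as [v|g p v v' Hs Hr IH|Rs p v v1 v' Hc Hr IH]; intros Hn; auto.
  - apply IH; intros Rs HR; apply Hn; simpl; auto.
  - rewrite IH. + destruct Hc as [_ [_ H3]]; apply H3, Hn; simpl; auto.
    + intros Rs' HR; apply Hn; simpl; auto.
Qed.

Lemma run_val {X : finType} (fut : X -> bool) p a c :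
  run fut p a c -> is_val fut a -> is_val fut c.
Proof.
  induction 1 as [v|g p v v' Hs Hr IH|Rs p v v1 v' Hc Hr IH]; intros Hv; auto.
  apply IH; apply Hc.
Qed.

Lemma first_rel {X : finType} (p : prog X) x :
  (exists Rs, In (IChange Rs) p /\ In x Rs) ->
  exists p1 Rs p2, p = p1 ++ IChange Rs :: p2 /\ In x Rs /\
    (forall Rs', In (IChange Rs') p1 -> ~ In x Rs').
Proof.
  induction p as [|i p IH]; intros [Rs [HI Hx]]; [destruct HI|].
  destruct (classic (exists Rs', i = IChange Rs' /\ In x Rs')) as [[Rs' [E Hx']]|Hn].
  - subst i. exists nil, Rs', p. split; [reflexivity|split; [assumption|]]. intros _ [].
  - destruct HI as [E|HI]. { exfalso; apply Hn; eauto. }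
    destruct (IH (ex_intro _ Rs (conj HI Hx))) as [p1 [Rs2 [p2 [E [H1 H2]]]]].
    subst p. exists (i :: p1), Rs2, p2. split; [reflexivity|split; [assumption|]].
    intros Rs' [E|H] Hx'; [subst i; apply Hn; eauto|eapply H2; eauto].
Qed.

Lemma min_nat (P : nat -> Prop) : (exists n, P n) -> exists n, P n /\ forall m, lt m n -> ~ P m.
Proof.
  intros [n Hn]. revert Hn. induction n as [n IH] using (well_founded_ind lt_wf). intros Hn.
  destruct (classic (exists m, lt m n /\ P m)) as [[m [Hm Pm]]|Hno].
  - exact (IH m Hm Pm).
  - exists n. split; auto. intros m Hm Pm. apply Hno; eauto.
Qed.

Lemma cstM (M : nat) z : cst_abs_le M (CZ z) -> - INR M <= IZR z <= INR M.
Proof.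
  simpl; intros H. rewrite INR_IZR_INZ. rewrite -opp_IZR. split; apply IZR_le; lia.
Qed.

Lemma cmp_neg (M : nat) o c a b : a < - INR M -> b < - INR M -> cst_abs_le M c ->
  (cmp o (Fin a) c <-> cmp o (Fin b) c).
Proof.
  intros Ha Hb Hc. destruct c as [z| |]; destruct o; simpl; unfold elt, ele; simpl.
  - apply cstM in Hc. split; intros _; split; try lra; intros E; injection E; lra.
  - apply cstM in Hc. split; intros _; lra.
  all: solve [tauto | split; intros [[] _] | split; intros _; split; auto; discriminate].
Qed.

Lemma cmp_pos (M : nat) o c a b : INR M < a -> INR M < b -> cst_abs_le M c ->
  (cmp o (Fin a) c <-> cmp o (Fin b) c).
Proof.
  intros Ha Hb Hc. destruct c as [z| |]; destruct o; simpl; unfold elt, ele; simpl.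
  - apply cstM in Hc. split; intros [H _]; lra.
  - apply cstM in Hc. split; intros; lra.
  all: solve [tauto | split; intros [[] _] | split; intros _; split; auto; discriminate].
Qed.

Definition Bp (R0 : R) (b : ER) : Prop :=
  b = PInf \/ b = NInf \/ exists s, b = Fin s /\ - R0 <= s.

Lemma pairB1 (M : nat) R0 p0 p0' b o c : 0 <= R0 -> p0 < - INR M -> p0' < - INR M ->
  Bp R0 b -> cst_abs_le M c ->
  (cmp o (esub (Fin (p0 - R0)) b) c <-> cmp o (esub (Fin (p0' - R0)) b) c).
Proof.
  intros HR H1 H2 [E|[E|[s [E Hs]]]] Hc; subst b; unfold esub; simpl; try tauto.
  apply (cmp_neg M); auto; lra.
Qed.

Lemma pairB2 (M : nat) R0 p0 p0' b o c : 0 <= R0 -> p0 < - INR M -> p0' < - INR M ->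
  Bp R0 b -> cst_abs_le M c ->
  (cmp o (esub b (Fin (p0 - R0))) c <-> cmp o (esub b (Fin (p0' - R0))) c).
Proof.
  intros HR H1 H2 [E|[E|[s [E Hs]]]] Hc; subst b; unfold esub; simpl; try tauto.
  apply (cmp_pos M); auto; lra.
Qed.

Arguments run_app {X fut p1 p2 a b c}.
Arguments run_split {X fut p1 p2 a c}.
Arguments run_unch {X fut p a c x}.
Arguments run_val {X fut p a c}.
Arguments first_rel {X p x}.

Lemma ele_NInf e : ele e NInf -> e = NInf.
Proof. destruct e; simpl; tauto. Qed.

Lemma fin_lt_helper (r m : R) e : (elt (Fin r) (Fin m) <-> elt e (Fin m)) ->
  (ele (Fin r) NInf <-> ele e NInf) -> r < m -> exists p, e = Fin p /\ p < m.
Proof.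
  intros H1 H2 Hr. destruct e as [p| |].
  - exists p; split; [reflexivity|]. unfold elt in H1; simpl in H1.
    destruct (proj1 H1) as [Hp Hne]. { split; [lra|intros E; injection E; lra]. }
    destruct (Req_dec p m) as [->|]; [exfalso; apply Hne; reflexivity|lra].
  - unfold elt in H1; simpl in H1. destruct (proj1 H1) as [[] _]. split; [lra|intros E; injection E; lra].
  - simpl in H2. exfalso; apply H2; exact I.
Qed.

Lemma esub_fin a b : esub (Fin a) (Fin b) = Fin (a + - b).
Proof. reflexivity. Qed.

Lemma guard_in {X Q Sg : finType} (A : GTA X Q Sg) t g :
  In t (gtrans A) -> In (IGuard g) (tprog t) -> In g (guards_of A).
Proof.
  intros Ht Hg. unfold guards_of. apply in_or_app; right. apply in_flat_map.
  exists t; split; auto. unfold prog_guards. apply in_flat_map.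
  exists (IGuard g); split; auto. left; reflexivity.
Qed.

Lemma shift_eq {X : finType} (v : valu X) d x : Defs.shift v d x = eshift (v x) d.
Proof. unfold Defs.shift, eshift. destruct (v x); reflexivity. Qed.


Theorem lemma11 (X : finType) (fut : X -> bool) (Q Sg : finType)
  (A : GTA X Q Sg) (M k : nat) (qs : nat -> Q) (vs : nat -> valu X)
  (ds : nat -> R) (ts : nat -> trans X Q Sg) (vk' : valu X) :
  safe fut A ->
  le 1 (nclocks X) ->
  const_bound M A ->
  is_path fut A k qs vs ds ts ->
  simM M (vs 0%nat) (vs (k - 1)%nat) ->
  (forall x, fut x = true ->
     (exists i, lt i (k - 1) /\ released fut (ts i) x) \/ vs 0%nat x = NInf) ->
  is_val fut vk' ->
  (forall x, ele (Fin (- INR M)) (vs 0%nat x) -> vk' x = vs (k - 1)%nat x) ->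
  approxM M (vs 0%nat) vk' ->
  exists vs' : nat -> valu X,
    vs' 0%nat = vs 0%nat /\ vs' (k - 1)%nat = vk' /\
    is_path fut A k qs vs' ds ts.
Proof.
  intros Hsafe Hn Hcb Hpath Hsim Hrel Hvk' HL Happ.
  destruct Hpath as [Hk [Hval Hstep]].
  assert (Hds : forall i, lt i (k-1) -> 0 <= ds i).
  { intros i Hi. destruct (Hstep i ltac:(lia)) as [_ [_ [_ [H _]]]]. exact H. }
  assert (Hsn : forall n i, (i + n <= k-1)%nat -> 0 <= sumd ds i n).
  { induction n as [|n IH]; intros i Hi; simpl; [lra|].
    assert (0 <= ds i) by (apply Hds; lia). assert (0 <= sumd ds (S i) n) by (apply IH; lia). lra. }
  assert (Hsm : forall n m i, (n <= m)%nat -> (i + m <= k-1)%nat -> sumd ds i n <= sumd ds i m).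
  { induction n as [|n IH]; intros m i H1 H2; simpl.
    - apply Hsn; lia.
    - destruct m as [|m]; [lia|]. simpl.
      assert (sumd ds (S i) n <= sumd ds (S i) m) by (apply IH; lia). lra. }
  pose (Rem := fun i => sumd ds i (k - 1 - i)).
  assert (HRS : forall i, lt i (k-1) -> Rem i = ds i + Rem (S i)).
  { intros i Hi. unfold Rem. replace (k - 1 - i)%nat with (S (k - 1 - S i)) by lia. reflexivity. }
  assert (HR0 : forall i, (i <= k-1)%nat -> 0 <= Rem i). { intros i Hi; unfold Rem; apply Hsn; lia. }
  assert (HRl : Rem (k-1)%nat = 0). { unfold Rem. rewrite Nat.sub_diag. reflexivity. }
  assert (HPE : forall n j y, fut y = true -> (j + n <= k-1)%nat ->
     (forall m, (j <= m)%nat -> lt m (j+n) -> ~ released fut (ts m) y) ->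
     vs (j+n)%nat y = eshift (vs j y) (sumd ds j n)).
  { induction n as [|n IH]; intros j y Hy Hjn Hnr.
    - rewrite Nat.add_0_r. simpl. rewrite eshift0. reflexivity.
    - replace (j + S n)%nat with (S j + n)%nat by lia.
      rewrite IH; auto; try lia.
      + destruct (Hstep j ltac:(lia)) as [_ [_ [_ [_ [_ Hr]]]]].
        rewrite (run_unch Hr).
        * rewrite shift_eq.
          rewrite eshift_add. reflexivity.
        * intros Rs HI Hx. apply (Hnr j); [lia|lia|]. split; [exact Hy|eauto].
      + intros m H1 H2. apply Hnr; lia. }
  pose (D := fun x => fut x = true /\ exists r, vs 0%nat x = Fin r /\ r < - INR M).
  pose (FRs := fun i x => exists j, (i <= j)%nat /\ lt j (k-1) /\ released fut (ts j) x).
  pose (FRp := fun i (p : prog X) x => (exists Rs, In (IChange Rs) p /\ In x Rs) \/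
                 exists j, lt i j /\ lt j (k-1) /\ released fut (ts j) x).
  pose (Pact := fun i p x => D x /\ ~ FRp i p x).
  pose (PactS := fun i x => D x /\ ~ FRs i x).
  assert (HM : 0 <= INR M) by apply pos_INR.
  assert (F1 : forall x, ~ D x -> vk' x = vs (k-1)%nat x).
  { intros x HD. pose proof (Hval 0%nat ltac:(lia) x) as Hv.
    destruct (fut x) eqn:Ef.
    - destruct Hv as [E|[r [E Hr]]].
      + pose proof (proj1 Hsim x OLe CNInf I) as h2. pose proof (proj1 Happ x OLe CNInf I) as h4.
        cbv beta iota delta [cmp cst_val] in h2, h4. rewrite E in h2 h4.
        rewrite (ele_NInf _ (proj1 h2 I)) (ele_NInf _ (proj1 h4 I)). reflexivity.
      + apply HL. rewrite E. simpl. destruct (Rlt_dec r (- INR M)) as [Hlt|Hge];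
          [exfalso; apply HD; split; [exact Ef|exists r; auto]|lra].
    - apply HL. destruct Hv as [E|[r [E Hr]]]; rewrite E; simpl; [exact I|lra]. }
  assert (HzM : IZR (- Z.of_nat M) = - INR M) by (rewrite opp_IZR -INR_IZR_INZ; reflexivity).
  assert (F2 : forall x, D x -> exists p0 p0', vs (k-1)%nat x = Fin p0 /\ vk' x = Fin p0' /\
            p0 < - INR M /\ p0' < - INR M /\ p0' <= 0).
  { intros x [Hf [r [E Hr]]].
    assert (Hc1 : cst_abs_le (Nat.mul (nclocks X) M) (CZ (- Z.of_nat M))).
    { unfold cst_abs_le. nia. }
    assert (Hc2 : cst_le M (CZ (- Z.of_nat M))). { unfold cst_le. lia. }
    pose proof (proj1 Hsim x OLt (CZ (- Z.of_nat M)) Hc1) as h1.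
    pose proof (proj1 Hsim x OLe CNInf I) as h2.
    pose proof (proj1 Happ x OLt (CZ (- Z.of_nat M)) Hc2) as h3.
    pose proof (proj1 Happ x OLe CNInf I) as h4.
    cbv beta iota delta [cmp cst_val] in h1, h2, h3, h4.
    rewrite HzM in h1 h3. rewrite E in h1 h2 h3 h4.
    destruct (fin_lt_helper _ _ _ h1 h2 Hr) as [p0 [E1 L1]].
    destruct (fin_lt_helper _ _ _ h3 h4 Hr) as [p0' [E2 L2]].
    exists p0, p0'. split; [exact E1|split; [exact E2|split; [exact L1|split; [exact L2|]]]].
    pose proof (Hvk' x) as Hv. rewrite Hf in Hv.
    destruct Hv as [E3|[r' [E3 Hr']]]; rewrite E2 in E3; [discriminate|injection E3; intros; lra]. }
  assert (F3 : forall x y p q p' q', vs (k-1)%nat x = Fin p -> vs (k-1)%nat y = Fin q ->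
     vk' x = Fin p' -> vk' y = Fin q' -> forall o c, cst_abs_le M c ->
     (cmp o (Fin (p + - q)) c <-> cmp o (Fin (p' + - q')) c)).
  { intros x y p q p' q' H1 H2 H3 H4 o c Hc.
    assert (Hc' : cst_abs_le (Nat.mul (S (nclocks X)) M) c).
    { destruct c as [z| |]; unfold cst_abs_le in *; auto. nia. }
    pose proof (proj2 Hsim x y o c Hc') as h1.
    pose proof (proj1 (proj2 Happ) x y o c Hc) as h2.
    rewrite H1 H2 esub_fin in h1. rewrite H3 H4 esub_fin in h2. tauto. }
  assert (PT : forall i p w y, lt i (k-1) -> run fut p w (vs (S i)) -> fut y = true ->
     ~ FRp i p y -> vs (k-1)%nat y = eshift (w y) (Rem (S i))).
  { intros i p w y Hi Hr Hy Hn0.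
    assert (E1 : vs (S i) y = w y).
    { apply (run_unch Hr). intros Rs HI Hx. apply Hn0. left. eauto. }
    assert (HNR : forall m, (S i <= m)%nat -> lt m (S i + (k - 1 - S i)) -> ~ released fut (ts m) y).
    { intros m H1 H2 Hrel'. apply Hn0. right. exists m. split; [lia|split; [lia|exact Hrel']]. }
    pose proof (HPE (k - 1 - S i)%nat (S i) y Hy ltac:(lia) HNR) as HH.
    replace (S i + (k - 1 - S i))%nat with (k-1)%nat in HH by lia.
    rewrite HH E1. reflexivity. }
  assert (PX : forall i pre p w0 w y, lt i (k-1) -> tprog (ts i) = pre ++ p -> run fut pre w0 w ->
     w0 = Defs.shift (vs i) (ds i) -> run fut p w (vs (S i)) -> fut y = true -> FRp i p y ->
     in_XD fut A y -> w y = NInf \/ exists r, w y = Fin r /\ - Rem (S i) <= r).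
  { intros i pre p w0 w y Hi Ep Hpre E0 Hr Hy HF HXD.
    destruct (Hstep i ltac:(lia)) as [Hin [_ [_ [_ [Hv0 _]]]]].
    assert (HR : 0 <= Rem (S i)) by (apply HR0; lia).
    destruct (classic (exists Rs, In (IChange Rs) p /\ In y Rs)) as [HA|HA].
    - destruct (first_rel HA) as [p1 [Rs [p2 [Ep' [Hy' Hn1]]]]].
      subst p. destruct (run_split Hr) as [w1 [Hr1 _]].
      assert (E1 : w1 y = w y) by exact (run_unch Hr1 Hn1).
      assert (Ep2 : tprog (ts i) = (pre ++ p1) ++ IChange Rs :: p2) by (rewrite Ep -app_assoc; reflexivity).
      assert (Hv0' : is_val fut w0) by (subst w0; exact Hv0).
      destruct (proj1 Hsafe (ts i) (pre ++ p1) Rs p2 y Hin Ep2 Hy' HXD w0 w1 Hv0' (run_app Hpre Hr1)) as [E|E];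
        rewrite E1 in E.
      + right; exists 0; split; [exact E|lra].
      + left; exact E.
    - destruct HF as [HF|HF]; [contradiction|].
      destruct (min_nat _ HF) as [j [[H1 [H2 Hrj]] Hmin]].
      assert (E1 : vs (S i) y = w y).
      { apply (run_unch Hr). intros Rs HI Hx. apply HA; eauto. }
      assert (HNR : forall m, (S i <= m)%nat -> lt m (S i + (j - S i)) -> ~ released fut (ts m) y).
      { intros m Hm1 Hm2 Hm. apply (Hmin m); [lia|]. split; [lia|split; [lia|exact Hm]]. }
      pose proof (HPE (j - S i)%nat (S i) y Hy ltac:(lia) HNR) as HH.
      replace (S i + (j - S i))%nat with j in HH by lia.
      rewrite E1 in HH.
      destruct Hrj as [_ [Rs [HI Hx]]].
      destruct (first_rel (ex_intro _ Rs (conj HI Hx))) as [p1 [Rs' [p2 [Ep' [Hy' Hn1]]]]].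
      destruct (Hstep j ltac:(lia)) as [Hinj [_ [_ [Hdj [Hvj Hrj]]]]].
      rewrite Ep' in Hrj. destruct (run_split Hrj) as [w1 [Hr1 _]].
      assert (E3 : w1 y = eshift (w y) (sumd ds (S i) (j - S i) + ds j)).
      { rewrite (run_unch Hr1 Hn1) shift_eq HH eshift_add. reflexivity. }
      assert (Hle : sumd ds (S i) (j - S i) + ds j <= Rem (S i)).
      { assert (Ed : ds j = ds (S i + (j - S i))%nat) by (f_equal; lia).
        rewrite Ed -(sumd_last ds (S i) (j - S i)). unfold Rem. apply Hsm; lia. }
      destruct (proj1 Hsafe (ts j) p1 Rs' p2 y Hinj Ep' Hy' HXD _ w1 Hvj Hr1) as [E|E];
        rewrite E3 in E; destruct (w y) as [r| |] eqn:Ew; simpl in E; try discriminate.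
      + right; exists r; split; [reflexivity|]. injection E; intros; lra.
      + left; reflexivity. }
  assert (SAT : forall i pre p w0 w g, lt i (k-1) -> tprog (ts i) = pre ++ p -> run fut pre w0 w ->
     w0 = Defs.shift (vs i) (ds i) -> run fut p w (vs (S i)) -> In g (guards_of A) -> sat w g ->
     sat (modv (Pact i p) (fun x => er (vk' x) - Rem (S i)) w) g).
  { intros i pre p w0 w g Hi Ep Hpre E0 Hr Hg Hs.
    destruct (Hstep i ltac:(lia)) as [Hin [_ [_ [_ [Hv0 _]]]]].
    assert (Hvw : is_val fut w) by (apply (run_val Hpre); subst w0; exact Hv0).
    assert (HR : 0 <= Rem (S i)) by (apply HR0; lia).
    pose proof (PT i p w) as PT'. pose proof (PX i pre p w0 w) as PX'.
    set (R0 := Rem (S i)) in *.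
    set (w' := modv (Pact i p) (fun x => er (vk' x) - R0) w).
    assert (SA : forall x, Pact i p x -> exists p0 p0', w x = Fin (p0 - R0) /\ w' x = Fin (p0' - R0) /\
       vs (k-1)%nat x = Fin p0 /\ vk' x = Fin p0' /\ p0 < - INR M /\ p0' < - INR M /\ fut x = true).
    { intros x [HD HnF]. destruct (F2 x HD) as [p0 [p0' [E1 [E2 [H1 [H2 H3]]]]]].
      exists p0, p0'.
      pose proof (PT' x Hi Hr (proj1 HD) HnF) as HT. rewrite E1 in HT.
      split.
      - destruct (w x) as [r| |] eqn:Ew; simpl in HT; try discriminate.
        injection HT; intros Hr'. f_equal; lra.
      - split; [|split; [exact E1|split; [exact E2|split; [exact H1|split; [exact H2|exact (proj1 HD)]]]]].
        unfold w'. rewrite (modv_act (conj HD HnF)). cbv beta. rewrite E2. reflexivity. }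
    assert (CL : forall x u, fut x = true -> Pact i p x ->
       (exists a, In a g /\ ((ax a = Some x /\ ay a = u) \/ (ax a = u /\ ay a = Some x))) ->
       (exists y, u = Some y /\ Pact i p y) \/
       (ev w' u = ev w u /\ (Bp R0 (ev w u) \/ exists y s q, u = Some y /\ w y = Fin s /\
           vs (k-1)%nat y = Fin q /\ vk' y = Fin q /\ q = s + R0))).
    { intros x [y|] Hx Hax Ha.
      - destruct (classic (Pact i p y)) as [Hy|Hy]; [left; eauto|right].
        assert (Ew : w' y = w y) by (unfold w'; rewrite (modv_nact Hy); reflexivity).
        simpl. rewrite Ew. split; [reflexivity|].
        destruct (fut y) eqn:Ef.
        + destruct (classic (FRp i p y)) as [HF|HF].
          * left. assert (HXD : in_XD fut A y).
            { split; [exact Ef|]. destruct Ha as [a [Ha H]]. exists g, a, x.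
              split; [exact Hg|split; [exact Ha|split; [exact Hx|]]].
              destruct H as [[H1 H2]|[H1 H2]]; [right|left]; split; congruence. }
            destruct (PX' y Hi Ep Hpre E0 Hr Ef HF HXD) as [E|[r [E Hr']]];
              [right; left; exact E | right; right; exists r; split; auto].
          * assert (HD : ~ D y) by (intro HD; apply Hy; split; auto).
            pose proof (F1 y HD) as E1. pose proof (PT' y Hi Hr Ef HF) as E2.
            destruct (w y) as [s| |] eqn:Ews.
            -- right. exists y, s, (s + R0). simpl in E2.
               split; [reflexivity|split; [exact Ews|split; [exact E2|split; [rewrite E1; exact E2|reflexivity]]]].
            -- left; left; reflexivity.
            -- left; right; left; reflexivity.
        + left. pose proof (Hvw y) as Hv; rewrite Ef in Hv.
          destruct Hv as [E|[r [E Hr']]]; [left; exact E|right; right; exists r; split; [exact E|lra]].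
      - right. simpl. split; [reflexivity|]. left. right; right. exists 0; split; [reflexivity|lra]. }
    intros a Ha. pose proof (Hs a Ha) as Hsa. unfold sat_atom in *.
    assert (Hc : cst_abs_le M (acst a)).
    { destruct (acst a) as [z| |] eqn:Ec; simpl; auto. exact (Hcb g a z Hg Ha Ec). }
    enough (IFF : cmp (aop a) (esub (ev w (ax a)) (ev w (ay a))) (acst a) <->
                  cmp (aop a) (esub (ev w' (ax a)) (ev w' (ay a))) (acst a)) by tauto.
    assert (SD : forall u, (exists x, u = Some x /\ Pact i p x) \/ ev w' u = ev w u).
    { intros [x|]; [|right; reflexivity]. destruct (classic (Pact i p x)) as [H|H];
        [left; eauto|right; simpl; unfold w'; rewrite (modv_nact H); reflexivity]. }
    destruct (SD (ax a)) as [[x [Ex Hx]]|Ex].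
    - destruct (SA x Hx) as [p0 [p0' [W1 [W1' [V1 [V1' [L1 [L1' Fx]]]]]]]].
      assert (Hex : exists a0, In a0 g /\ ((ax a0 = Some x /\ ay a0 = ay a) \/ (ax a0 = ay a /\ ay a0 = Some x)))
        by (exists a; split; [exact Ha|left; split; [exact Ex|reflexivity]]).
      destruct (CL x (ay a) Fx Hx Hex) as [[y [Ey Hy]]|[Ew' [HB|[y [s [q [Ey [Ws [Vq [Vq' Eq]]]]]]]]]].
      + destruct (SA y Hy) as [q0 [q0' [W2 [W2' [V2 [V2' _]]]]]].
        rewrite Ex Ey /= W1 W1' W2 W2' !esub_fin.
        replace (p0 - R0 + - (q0 - R0)) with (p0 + - q0) by ring.
        replace (p0' - R0 + - (q0' - R0)) with (p0' + - q0') by ring.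
        exact (F3 x y p0 q0 p0' q0' V1 V2 V1' V2' _ _ Hc).
      + rewrite Ew' Ex /= W1 W1'. exact (pairB1 M R0 p0 p0' _ (aop a) (acst a) HR L1 L1' HB Hc).
      + rewrite Ew' Ex Ey /= W1 W1' Ws !esub_fin.
        replace (p0 - R0 + - s) with (p0 + - q) by (rewrite Eq; ring).
        replace (p0' - R0 + - s) with (p0' + - q) by (rewrite Eq; ring).
        exact (F3 x y p0 q p0' q V1 Vq V1' Vq' _ _ Hc).
    - destruct (SD (ay a)) as [[y [Ey Hy]]|Ey].
      + destruct (SA y Hy) as [p0 [p0' [W1 [W1' [V1 [V1' [L1 [L1' Fy]]]]]]]].
        assert (Hex : exists a0, In a0 g /\ ((ax a0 = Some y /\ ay a0 = ax a) \/ (ax a0 = ax a /\ ay a0 = Some y)))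
          by (exists a; split; [exact Ha|right; split; [reflexivity|exact Ey]]).
        destruct (CL y (ax a) Fy Hy Hex) as [[x [Ex2 Hx]]|[Ew' [HB|[x [s [q [Ex2 [Ws [Vq [Vq' Eq]]]]]]]]]].
        * destruct (SA x Hx) as [q0 [q0' [W2 [W2' [V2 [V2' _]]]]]].
          rewrite Ex2 Ey /= W1 W1' W2 W2' !esub_fin.
          replace (q0 - R0 + - (p0 - R0)) with (q0 + - p0) by ring.
          replace (q0' - R0 + - (p0' - R0)) with (q0' + - p0') by ring.
          exact (F3 x y q0 p0 q0' p0' V2 V1 V2' V1' _ _ Hc).
        * rewrite Ew' Ey /= W1 W1'. exact (pairB2 M R0 p0 p0' _ (aop a) (acst a) HR L1 L1' HB Hc).
        * rewrite Ew' Ex2 Ey /= W1 W1' Ws !esub_fin.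
          replace (s + - (p0 - R0)) with (q + - p0) by (rewrite Eq; ring).
          replace (s + - (p0' - R0)) with (q + - p0') by (rewrite Eq; ring).
          exact (F3 x y q p0 q p0' Vq V1 Vq' V1' _ _ Hc).
      + rewrite Ex Ey. tauto. }
  assert (SIM : forall i, lt i (k-1) -> forall p w w'', run fut p w w'' -> w'' = vs (S i) ->
     forall pre w0, tprog (ts i) = pre ++ p -> run fut pre w0 w -> w0 = Defs.shift (vs i) (ds i) ->
     run fut p (modv (Pact i p) (fun x => er (vk' x) - Rem (S i)) w)
               (modv (Pact i nil) (fun x => er (vk' x) - Rem (S i)) w'')).
  { intros i Hi p w w'' Hr.
    destruct (Hstep i ltac:(lia)) as [Hin [_ [_ [_ [Hv0 _]]]]].
    induction Hr as [v|g p v v' Hs Hr IH|Rs p v v1 v' Hc Hr IH]; intros E'' pre w0 Ep Hpre E0.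
    - constructor.
    - assert (EQ : modv (Pact i (IGuard g :: p)) (fun x => er (vk' x) - Rem (S i)) v =
                   modv (Pact i p) (fun x => er (vk' x) - Rem (S i)) v).
      { apply modv_ext; [|intros; reflexivity|intros; reflexivity].
        intros x. unfold Pact, FRp. split; intros [H1 H2]; split; auto; intros H3; apply H2.
        - destruct H3 as [[Rs [HI Hx]]|H3]; [left; exists Rs; split; [right; exact HI|exact Hx]|right; exact H3].
        - destruct H3 as [[Rs [[HI|HI] Hx]]|H3]; [discriminate| left; eauto | right; exact H3]. }
      assert (Ep' : tprog (ts i) = (pre ++ IGuard g :: nil) ++ p) by (rewrite Ep -app_assoc; reflexivity).
      assert (Hpre' : run fut (pre ++ IGuard g :: nil) w0 v).
      { apply (run_app Hpre). constructor; [exact Hs|constructor]. }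
      assert (Hgi : In g (guards_of A)).
      { apply (guard_in A (ts i)); [exact Hin|]. rewrite Ep. apply in_or_app; right; left; reflexivity. }
      rewrite EQ. constructor.
      + subst v'. exact (SAT i _ p w0 v g Hi Ep' Hpre' E0 Hr Hgi Hs).
      + exact (IH E'' _ w0 Ep' Hpre' E0).
    - assert (IFF : forall x, ~ In x Rs -> (Pact i (IChange Rs :: p) x <-> Pact i p x)).
      { intros x Hx. unfold Pact, FRp. split; intros [H1 H2]; split; auto; intros H3; apply H2.
        - destruct H3 as [[Rs' [HI Hx']]|H3]; [left; exists Rs'; split; [right; exact HI|exact Hx']|right; exact H3].
        - destruct H3 as [[Rs' [[HI|HI] Hx']]|H3].
          + injection HI; intros; subst; contradiction.
          + left; eauto.
          + right; exact H3. }
      assert (Ep' : tprog (ts i) = (pre ++ IChange Rs :: nil) ++ p) by (rewrite Ep -app_assoc; reflexivity).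
      assert (Hpre' : run fut (pre ++ IChange Rs :: nil) w0 v1).
      { apply (run_app Hpre). econstructor; [exact Hc|constructor]. }
      econstructor; [|exact (IH E'' _ w0 Ep' Hpre' E0)].
      split; [|split].
      + apply modv_val; [apply Hc| intros x [[H _] _]; exact H|].
        intros x [HD _]. destruct (F2 x HD) as [p0 [p0' [_ [E [_ [_ H]]]]]].
        rewrite E /=. assert (0 <= Rem (S i)) by (apply HR0; lia). lra.
      + intros x Hx Hf. assert (Hn' : ~ Pact i p x) by (intros [[H _] _]; congruence).
        rewrite (modv_nact Hn'). apply (proj1 (proj2 Hc)); auto.
      + intros x Hx. destruct (classic (Pact i p x)) as [H|H].
        * rewrite (modv_act H) (modv_act (proj2 (IFF x Hx) H)). reflexivity.
        * assert (H' : ~ Pact i (IChange Rs :: p) x) by (intro H'; apply H, (IFF x Hx); exact H').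
          rewrite (modv_nact H) (modv_nact H'). apply (proj2 (proj2 Hc)); auto. }
  pose (vs' := fun i => modv (PactS i) (fun x => er (vk' x) - Rem i) (vs i)).
  exists vs'. split; [|split].
  - apply functional_extensionality; intros x. unfold vs'.
    assert (H : ~ PactS 0%nat x).
    { intros [[Hf [r [E _]]] HnF]. destruct (Hrel x Hf) as [[j [Hj Hr]]|E'];
        [apply HnF; exists j; split; [lia|split; auto] | congruence]. }
    rewrite (modv_nact H). reflexivity.
  - apply functional_extensionality; intros x. unfold vs'.
    destruct (classic (D x)) as [HD|HD].
    + assert (H : PactS (k-1)%nat x) by (split; auto; intros [j [H1 [H2 _]]]; lia).
      rewrite (modv_act H). cbv beta. destruct (F2 x HD) as [p0 [p0' [_ [E _]]]].
      rewrite E HRl. simpl. f_equal; ring.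
    + assert (H : ~ PactS (k-1)%nat x) by (intros [H _]; contradiction).
      rewrite (modv_nact H). symmetry; apply F1; exact HD.
  - split; [exact Hk|split].
    + intros i Hi. unfold vs'. apply modv_val; [apply Hval; auto | intros x [[H _] _]; exact H |].
      intros x [HD _]. destruct (F2 x HD) as [p0 [p0' [_ [E [_ [_ H]]]]]].
      rewrite E /=. assert (0 <= Rem i) by (apply HR0; lia). lra.
    + intros i Hi. destruct (Hstep i Hi) as [Hin [Hsrc [Hdst [Hd [Hv Hr]]]]].
      assert (EQ1 : Defs.shift (vs' i) (ds i) =
                    modv (Pact i (tprog (ts i))) (fun x => er (vk' x) - Rem (S i)) (Defs.shift (vs i) (ds i))).
      { apply functional_extensionality; intros x. unfold vs'.
        assert (IFF : PactS i x <-> Pact i (tprog (ts i)) x).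
        { unfold PactS, Pact, FRs, FRp. split; intros [HD HnF]; split; auto; intros HF; apply HnF.
          - destruct HF as [HF|[j [H1 [H2 H3]]]].
            + exists i; split; [lia|split; [lia|split; [exact (proj1 HD)|exact HF]]].
            + exists j; split; [lia|split; auto].
          - destruct HF as [j [H1 [H2 H3]]]. destruct (Nat.eq_dec i j) as [Eij|Hne].
            + subst j. left. destruct H3 as [_ H3]; exact H3.
            + right; exists j; split; [lia|split; auto]. }
        rewrite !shift_eq.
        destruct (classic (PactS i x)) as [H|H].
        - rewrite (modv_act H) (modv_act (proj1 IFF H)). simpl. f_equal.
          rewrite (HRS i ltac:(lia)). ring.
        - rewrite (modv_nact H) (modv_nact (fun H' => H (proj2 IFF H'))). rewrite shift_eq. reflexivity. }
      assert (EQ2 : vs' (S i) = modv (Pact i nil) (fun x => er (vk' x) - Rem (S i)) (vs (S i))).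
      { unfold vs'. apply modv_ext; [|intros; reflexivity|intros; reflexivity].
        intros x. unfold PactS, Pact, FRs, FRp. split; intros [HD HnF]; split; auto; intros HF; apply HnF.
        all: first [ destruct HF as [[Rs [[] _]]|[j [H1 [H2 H3]]]]; exists j; split; [lia|auto]
                   | destruct HF as [j [H1 [H2 H3]]]; right; exists j; split; [lia|auto] ]. }
      split; [exact Hin|split; [exact Hsrc|split; [exact Hdst|split; [exact Hd|split]]]].
      * rewrite EQ1. apply modv_val; [exact Hv| intros x [[H _] _]; exact H|].
        intros x [HD _]. destruct (F2 x HD) as [p0 [p0' [_ [E [_ [_ H]]]]]].
        rewrite E /=. assert (0 <= Rem (S i)) by (apply HR0; lia). lra.
      * rewrite EQ1 EQ2.
        exact (SIM i ltac:(lia) _ _ _ Hr (Logic.eq_refl _) nil (Defs.shift (vs i) (ds i)) (Logic.eq_refl _) (run_nil _ _) (Logic.eq_refl _)).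
Qed.
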